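(* Let $q$ be a prime power and let $n,k$ be integers with $5\le k\le \frac{n-2}{2}$ and $n\le q$. Let $\alpha_1,\dots,\alpha_n\in\mathbb{F}_q$ be pairwise distinct, and let $C_{k-1,k-2}$ be the linear code generated by the $k\times n$ matrix whose rows are $(\alpha_1^{e},\dots,\alpha_n^{e})$ for $e=0,1,\dots,k-3,k,k+1$. If $C_{k-1,k-2}$ is MDS, then $C_{k-1,k-2}$ is a non-GRS MDS code.
   Context: Convention: $0^0=1$. A linear code is MDS if its parameters $[n,k,d]$ satisfy $d=n-k+1$. For pairwise distinct $a_1,\dots,a_n\in\mathbb{F}_q$ and $w\in(\mathbb{F}_q^* )^n$, the generalized Reed–Solomon code is $GRS(n,k,\{a_i\},w)=\{(w_1f(a_1),\dots,w_nf(a_n)) : f\in\mathbb{F}_q[x],\ \deg f\le k-1\}$. Two codes are (monomially) equivalent if one is obtained from the other by a permutation of coordinates and multiplication of coordinates by nonzero scalars. A non-GRS MDS code is an MDS code not equivalent to any GRS code. *)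

(* Defs.v *)
From HB Require Import structures.
From mathcomp Require Import all_boot all_order all_algebra all_fingroup all_field.
Set Implicit Arguments. Unset Strict Implicit. Unset Printing Implicit Defensive.
Import GRing.Theory.
Local Open Scope ring_scope.

Section Codes.
Variable F : fieldType.

Definition wt n (x : 'rV[F]_n) : nat := #|[set i | x 0 i != 0]|.

Definition code_of_mx k n (G : 'M[F]_(k, n)) : 'rV[F]_n -> Prop :=
  fun x => (x <= G)%MS.

Definition has_min_dist n (C : 'rV[F]_n -> Prop) (d : nat) : Prop :=
  (exists c, [/\ C c, c != 0 & wt c = d]) /\
  (forall c, C c -> c != 0 -> (d <= wt c)%N).

Definition MDS_mx k n (G : 'M[F]_(k, n)) : Prop :=
  has_min_dist (code_of_mx G) (n - \rank G + 1)%N.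

Definition GRS n (k : nat) (a : 'I_n -> F) (w : 'I_n -> F) : 'rV[F]_n -> Prop :=
  fun x => exists p : {poly F}, (size p <= k)%N /\ x = \row_i (w i * p.[a i]).

Definition monomial_map n (s : 'S_n) (v : 'I_n -> F) (x : 'rV[F]_n) : 'rV[F]_n :=
  \row_i (v i * x 0 (s i)).

Definition code_equiv n (C1 C2 : 'rV[F]_n -> Prop) : Prop :=
  exists (s : 'S_n) (v : 'I_n -> F), (forall i, v i != 0) /\
    (forall y, C2 y <-> exists x, C1 x /\ y = monomial_map s v x).

Definition is_GRS_equiv n (C : 'rV[F]_n -> Prop) : Prop :=
  exists (k : nat) (a w : 'I_n -> F),
    injective a /\ (forall i, w i != 0) /\ code_equiv (GRS k a w) C.

(* exponents 0,1,...,k-3,k,k+1 : row r has exponent r if r < k-2, else r+2 *)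
Definition expo (k r : nat) : nat := if (r < k - 2)%N then r else (r + 2)%N.

Definition gen_mx_C k n (alpha : 'I_n -> F) : 'M[F]_(k, n) :=
  \matrix_(r < k, i < n) alpha i ^+ expo k r.

End Codes.

(* Main.v *)
Require Import Defs.
From HB Require Import structures.
From mathcomp Require Import all_boot all_order all_algebra all_fingroup all_field.
From mathcomp Require Import zify.
Set Implicit Arguments. Unset Strict Implicit.
Import GRing.Theory.
Local Open Scope ring_scope.

Lemma roots_zero (F : fieldType) n (b : 'I_n -> F) (q : {poly F}) :
  injective b -> (size q <= n)%N -> (forall i, q.[b i] = 0) -> q = 0.
Proof.
move=> bi sq hq; apply/eqP; apply/negPn/negP => nz.
have := max_poly_roots (rs := map b (enum 'I_n)) nz.
rewrite size_map size_enum_ord map_inj_uniq ?enum_uniq //.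
have -> : all (root q) [seq b i | i <- enum 'I_n].
  by apply/allP => x /mapP [i _ ->]; rewrite /root hq.
by move=> /(_ isT isT); rewrite ltnNge sq.
Qed.

Lemma indep_pows (F : fieldType) n d (u al : 'I_n -> F) (f : 'I_d -> nat) :
  injective al -> injective f -> (forall j, f j < n)%N -> (forall i, u i != 0) ->
  row_free (\matrix_(j < d, i < n) (u i * al i ^+ f j)).
Proof.
move=> ali fi fn unz; apply/inj_row_free => x Hx.
pose q : {poly F} := \sum_(j < d) x 0 j *: 'X^(f j).
have cq m : q`_m = \sum_(j < d) x 0 j * (m == f j)%:R.
  by rewrite coef_sum; apply: eq_bigr => j _; rewrite coefZ coefXn.
have q0 : q = 0.
  apply: (roots_zero ali).
    apply/leq_sizeP => m hm; rewrite cq big1 // => j _.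
    have : m != f j by apply/eqP => E; have := fn j; rewrite -E ltnNge hm.
    by move/negbTE => ->; rewrite mulr0.
  move=> i; have := congr1 (fun M : 'rV[F]_n => M 0 i) Hx; rewrite !mxE.
  have -> : q.[al i] = \sum_(j < d) x 0 j * al i ^+ f j.
    by rewrite horner_sum; apply: eq_bigr => j _; rewrite hornerZ hornerXn.
  under eq_bigr do rewrite mxE mulrCA.
  by rewrite -mulr_sumr => /eqP; rewrite mulf_eq0 (negbTE (unz i)) /= => /eqP.
apply/rowP => j; rewrite mxE.
have := cq (f j); rewrite q0 coef0 (bigD1 j) //= eqxx mulr1 big1 ?addr0 //.
move=> j' nj; rewrite (_ : (f j == f j') = false) ?mulr0 //.
by apply/negbTE; apply: contra nj => /eqP /fi ->.
Qed.

Lemma GRS_sub (F : fieldType) n D (c b : 'I_n -> F) (q : {poly F}) :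
  (size q <= D)%N ->
  submx (\row_i (c i * q.[b i])) (\matrix_(j < D, i < n) (c i * b i ^+ j)).
Proof.
move=> sq.
have -> : \row_i (c i * q.[b i]) = (poly_rV q : 'rV_D) *m \matrix_(j < D, i < n) (c i * b i ^+ j).
  apply/rowP => i; rewrite !mxE (horner_coef_wide _ sq) mulr_sumr.
  by apply: eq_bigr => j _; rewrite !mxE mulrCA.
exact: submxMl.
Qed.

Lemma decomp k e : (5 <= k)%N -> (e <= 2 * k - 2)%N || (e == 2 * k)%N ->
  exists e1 e2 : nat, [/\ (e1 <= k - 3)%N || (e1 == k) || (e1 == k.+1),
                         (e2 <= k - 3)%N || (e2 == k) || (e2 == k.+1) & (e1 + e2 = e)%N].
Proof.
move=> k5 he.
case: (leqP e (2 * k - 6)) => h1.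
  by exists (minn e (k - 3)), (e - minn e (k - 3))%N; split; lia.
case: (leqP e (2 * k - 3)) => h2.
  by exists k, (e - k)%N; split; lia.
case: (e =P (2 * k - 2)%N) => h3.
  by exists k.+1, (k - 3)%N; split; lia.
by exists k, k; split; lia.
Qed.

Theorem theorem3p7 (F : finFieldType) (n k : nat) (alpha : 'I_n -> F) :
  (5 <= k)%N -> (2 * k + 2 <= n)%N -> (n <= #|F|)%N ->
  injective alpha ->
  MDS_mx (gen_mx_C k alpha) ->
  MDS_mx (gen_mx_C k alpha) /\ ~ is_GRS_equiv (code_of_mx (gen_mx_C k alpha)).
Proof.
move=> k5 nk nF ainj HM; split => //.
case=> k' [a [w [ai [wnz [s [v [vnz Heq]]]]]]].
set G := gen_mx_C k alpha.
pose u i := v i * w (s i). pose b i := a (s i).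
have bi : injective b by move=> x y /ai /perm_inj.
have unz i : u i != 0 by rewrite mulf_neq0.
have Cu y : code_of_mx G y -> exists p : {poly F}, (size p <= k')%N /\ y = \row_i (u i * p.[b i]).
  move/Heq => [x [[p [sp ->]] ->]]; exists p; split => //.
  by apply/rowP => i; rewrite !mxE mulrA.
have uC (p : {poly F}) : (size p <= k')%N -> code_of_mx G (\row_i (u i * p.[b i])).
  move=> sp; apply/Heq; exists (\row_j (w j * p.[a j])); split; first by exists p.
  by apply/rowP => i; rewrite !mxE mulrA.
have rG : (\rank G <= k)%N := rank_leq_row G.
have kk : (k' <= k)%N.
  pose m := minn k' n.
  have fn (j : 'I_m) : (val j < n)%N by apply: leq_trans (ltn_ord j) (geq_minr _ _).
  have rf := @indep_pows F n m u b (fun j => val j) bi val_inj fn unz.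
  have sub : submx (\matrix_(j < m, i < n) (u i * b i ^+ j)) G.
    apply/row_subP => j.
    have -> : row j (\matrix_(j < m, i < n) (u i * b i ^+ j)) = \row_i (u i * ('X^j).[b i]).
      by apply/rowP => i; rewrite !mxE hornerXn.
    apply: uC; rewrite size_polyXn; apply: leq_trans (ltn_ord j) (geq_minl _ _).
  have := mxrankS sub; rewrite (eqP rf) => hm.
  rewrite /m in hm; lia.
have Ca e : (e <= k - 3)%N || (e == k) || (e == k.+1) -> code_of_mx G (\row_i alpha i ^+ e).
  move=> he.
  have r0k : ((if (e <= k - 3)%N then e else e - 2) < k)%N by case: ifP; lia.
  pose r := Ordinal r0k.
  have -> : \row_i alpha i ^+ e = row r G.
    apply/rowP => i; rewrite !mxE; congr (_ ^+ _).
    by rewrite /expo /=; case: ifP; case: ifP; lia.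
  exact: row_sub.
pose f (j : 'I_(2 * k)) : nat := if (2 * k - 1 <= nat_of_ord j)%N then (nat_of_ord j).+1 else nat_of_ord j.
have finj : injective f.
  move=> x y; rewrite /f => h; apply/val_inj => /=.
  have := ltn_ord x; have := ltn_ord y; move: h.
  by case: ifP; case: ifP; lia.
have fn j : (f j < n)%N by have := ltn_ord j; rewrite /f; case: ifP; lia.
have rfB := @indep_pows F n (2 * k) (fun _ => 1) alpha f ainj finj fn (fun _ => oner_neq0 _).
have subB : submx (\matrix_(j < 2 * k, i < n) (1 * alpha i ^+ f j))
                 (\matrix_(j < (2 * k').-1, i < n) (u i ^+ 2 * b i ^+ j)).
  apply/row_subP => r.
  have hr : (f r <= 2 * k - 2)%N || (f r == 2 * k)%N.
    by have := ltn_ord r; rewrite /f; case: ifP; lia.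
  have [e1 [e2 [E1 E2 E12]]] := decomp k5 hr.
  have [p1 [s1 h1]] := Cu _ (Ca _ E1).
  have [p2 [s2 h2]] := Cu _ (Ca _ E2).
  have -> : row r (\matrix_(j < 2 * k, i < n) (1 * alpha i ^+ f j))
            = \row_i (u i ^+ 2 * (p1 * p2).[b i]).
    apply/rowP => i; rewrite !mxE mul1r hornerM -E12 exprD.
    have := congr1 (fun M : 'rV[F]_n => M 0 i) h1.
    have := congr1 (fun M : 'rV[F]_n => M 0 i) h2.
    rewrite !mxE => -> ->; rewrite expr2 mulrACA //.
  apply: GRS_sub; apply: leq_trans (size_polyMleq _ _) _; by rewrite -!subn1 leq_sub2r // mul2n -addnn leq_add.
have := mxrankS subB; rewrite (eqP rfB) => h.
have := rank_leq_row (\matrix_(j < (2 * k').-1, i < n) (u i ^+ 2 * b i ^+ j)).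
lia.
Qed.
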